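(* For every nonnegative integer $n$, $$\sum_{k=0}^{\infty}(-1)^k(4k+1)\,\frac{(-3n)_k\,(-4n-\tfrac16)_k\,(\tfrac12)_k}{k!\,(3n+\tfrac32)_k\,(4n+\tfrac53)_k}=\left(\frac{2^8 3^3}{7^7}\right)^n\frac{(\tfrac{11}{12})_n(\tfrac56)_n(\tfrac12)_n(\tfrac{5}{12})_n(\tfrac76)_n^2}{(\tfrac{11}{21})_n(\tfrac{23}{21})_n(\tfrac{5}{21})_n(\tfrac{17}{21})_n(\tfrac{8}{21})_n(\tfrac{20}{21})_n}.$$ (The sum is finite, since $(-3n)_k=0$ for $k>3n$.)
   Context: $(a)_j=\Gamma(a+j)/\Gamma(a)=a(a+1)\cdots(a+j-1)$ denotes the rising factorial (Pochhammer symbol), with $(a)_0=1$. *)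

(* Defs.v *)
From HB Require Import structures.
From mathcomp Require Import all_boot all_order all_algebra.
Set Implicit Arguments. Unset Strict Implicit. Unset Printing Implicit Defensive.
Import Order.TTheory GRing.Theory Num.Theory.
Local Open Scope ring_scope.

Definition poch (a : rat) (j : nat) : rat := \prod_(i < j) (a + i%:R).

(* Main.v *)
Require Import Defs.
From HB Require Import structures.
From mathcomp Require Import all_boot all_order all_algebra.
From Stdlib Require Import Ring Field.
Import Order.TTheory GRing.Theory Num.Theory.
Local Open Scope ring_scope.

Definition qadd (x y : rat) : rat := x + y.
Definition qmul (x y : rat) : rat := x * y.
Definition qopp (x : rat) : rat := - x.
Definition qinv (x : rat) : rat := x^-1.
Definition q0 : rat := 0.
Definition q1 : rat := 1.
Definition qsub (x y : rat) : rat := qadd x (qopp y).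
Definition qdiv (x y : rat) : rat := qmul x (qinv y).
Lemma qaddE (x y : rat) : x + y = qadd x y. Proof. by []. Qed.
Lemma qmulE (x y : rat) : x * y = qmul x y. Proof. by []. Qed.
Lemma qoppE (x : rat) : - x = qopp x. Proof. by []. Qed.
Lemma qinvE (x : rat) : x^-1 = qinv x. Proof. by []. Qed.
Lemma q0E : 0 = q0 :> rat. Proof. by []. Qed.
Lemma q1E : 1 = q1 :> rat. Proof. by []. Qed.

Lemma rat_ring_th : @ring_theory rat q0 q1 qadd qmul qsub qopp eq.
Proof.
rewrite /qsub /qadd /qmul /qopp /q0 /q1.
split=> *; rewrite ?add0r ?mul1r ?mulrA ?addrA ?mulrDl ?subrr //; first exact: addrC; first exact: mulrC; exact: addrA.
Qed.
Lemma rat_field_th : @field_theory rat q0 q1 qadd qmul qsub qopp qdiv qinv eq.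
Proof.
split=> //; first exact: rat_ring_th.
by move=> p /eqP; rewrite /qmul /qinv; apply: mulVf.
Qed.
Add Field ratF : rat_field_th.

Lemma pos_addr (a b : rat) : 0 < a -> 0 <= b -> 0 < a + b.
Proof. move=> ha hb. exact: ltr_wpDr. Qed.
Lemma pos_addl (a b : rat) : 0 <= a -> 0 < b -> 0 < a + b.
Proof. move=> ha hb. rewrite addrC. exact: ltr_wpDr. Qed.

Lemma pochS a k : poch a k.+1 = poch a k * (a + k%:R).
Proof. by rewrite /poch big_ord_recr. Qed.
Lemma poch0 a : poch a 0 = 1.
Proof. by rewrite /poch big_ord0. Qed.
Lemma poch_shift a k : poch a k.+1 = a * poch (a + 1) k.
Proof.
rewrite /poch big_ord_recl addr0; congr (_ * _); apply: eq_bigr => i _.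
by rewrite /= mulrS addrA (addrC a 1) -addrA addrC.
Qed.
Lemma poch_gt0 a k : 0 < a -> 0 < poch a k.
Proof. move=> ha; apply: prodr_gt0 => i _; exact: pos_addr. Qed.
Lemma poch_add a i j : poch a (i + j) = poch a i * poch (a + i%:R) j.
Proof.
elim: j => [|j IH]; first by rewrite addn0 poch0 mulr1.
by rewrite addnS !pochS IH natrD addrA mulrA.
Qed.
Lemma poch_negz j k : (j < k)%N -> poch (- j%:R) k = 0.
Proof.
move=> hjk; apply/eqP/prodf_eq0; exists (Ordinal hjk) => //=.
by rewrite addrC subrr.
Qed.

Lemma neq0P (x : rat) : x != 0 -> x <> 0. Proof. by move/eqP. Qed.
Definition qnat (n : nat) : rat := n%:R.
Lemma qnatE n : n%:R = qnat n :> rat. Proof. by []. Qed.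
Definition qexp (x : rat) (n : nat) : rat := x ^+ n.
Lemma qexpE x n : x ^+ n = qexp x n. Proof. by []. Qed.
Ltac qnorm := rewrite ?mulrSr ?mulr0n ?add0r ?qexpE ?qnatE ?qaddE ?qmulE ?qoppE ?qinvE ?q0E ?q1E.
Ltac pos := match goal with
 | |- is_true (0 < _ + _) => first [ apply: addr_gt0; pos | apply: pos_addr; [pos | nneg] | apply: pos_addl; [nneg|pos] ]
 | |- is_true (0 < _ * _) => apply: mulr_gt0; pos
 | |- is_true (0 < _^-1) => rewrite invr_gt0; pos
 | |- is_true (0 < poch _ _) => apply: poch_gt0; pos
 | |- is_true (0 < _ ^+ _) => apply: exprn_gt0; pos
 | |- is_true (0 < 1) => exact: ltr01
 | |- is_true (0 < (_`!)%:R) => rewrite ltr0n; exact: fact_gt0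
 | |- is_true (0 < _%:R) => rewrite ltr0n; done
 | _ => first [assumption | exact: ltr01 | done]
end
with nneg := match goal with
 | |- is_true (0 <= _ + _) => apply: addr_ge0; nneg
 | |- is_true (0 <= _%:R) => exact: ler0n
 | |- is_true (0 <= 0) => exact: lexx
 | |- is_true (0 <= _ * _) => apply: mulr_ge0; nneg
 | |- is_true (0 <= _) => apply: ltW; pos
end.
Ltac qside := rewrite /qadd /qmul /qopp /qinv /q0 /q1 /qnat;
  repeat match goal with |- _ /\ _ => split end;
  try (apply: neq0P; rewrite ?oppr_eq0; apply: lt0r_neq0; pos).
Ltac reifn n :=
  lazymatch n with
  | O => constr:(q0)
  | S ?m => let m' := reifn m in constr:(qadd m' q1)
  | (?a * ?b)%N => let a' := reifn a in let b' := reifn b in constr:(qmul a' b')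
  | (?a + ?b)%N => let a' := reifn a in let b' := reifn b in constr:(qadd a' b')
  | _ => constr:(qnat n)
  end.
Ltac reif t :=
  lazymatch t with
  | ?a + ?b => let a' := reif a in let b' := reif b in constr:(qadd a' b')
  | ?a * ?b => let a' := reif a in let b' := reif b in constr:(qmul a' b')
  | - ?a => let a' := reif a in constr:(qopp a')
  | ?a ^-1 => let a' := reif a in constr:(qinv a')
  | 0 => constr:(q0)
  | 1 => constr:(q1)
  | ?n%:R => reifn n
  | ?x ^+ ?n => let x' := reif x in constr:(qexp x' n)
  | poch ?a ?k => let a' := reif a in constr:(poch a' k)
  | _ => t
  end.
Ltac rfield := rewrite ?mulrSr ?natrM ?mulrSr ?mulr0n ?add0r; match goal with |- ?a = ?b =>
  let a' := reif a in let b' := reif b in change (@eq rat a' b') end; field.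


Definition T (d : rat) (m k : nat) : rat :=
  (-1) ^+ k * (4 * k%:R + 1)
     * (poch (- m%:R) k * poch (3 / 2 - d) k * poch (1 / 2) k)
     / ((k`!)%:R * poch (m%:R + 3 / 2) k * poch d k).

Definition G (d : rat) (m k : nat) : rat :=
  - ((3 / 2 + m%:R) / (d + m%:R)) * (-1) ^+ k * 2 * poch (3 / 2 - d) k * poch (1 / 2) k
    * k%:R * (d - 1 + k%:R) * poch (- (m.+1)%:R) k
    / ((m.+1)%:R * (k`!)%:R * poch (m%:R + 3 / 2) k * poch d k).

Lemma pochN m k : poch (- m%:R) k = poch (- (m.+1)%:R) k * ((m.+1)%:R - k%:R) / (m.+1)%:R.
Proof.
have h1 := pochS (- (m.+1)%:R) k.
rewrite poch_shift in h1.
rewrite (_ : - (m.+1)%:R + 1 = - m%:R :> rat) in h1; last by rewrite mulrSr opprD addrNK.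
have -> : poch (- m%:R) k = (- (m.+1)%:R * poch (- m%:R) k) / (- (m.+1)%:R).
  rfield. all: qside.
rewrite h1. rfield. all: qside.
Qed.
Lemma pochQ m k : poch ((m.+1)%:R + 3 / 2) k = poch (m%:R + 3 / 2) k * (m%:R + 3 / 2 + k%:R) / (m%:R + 3 / 2).
Proof.
have h1 := pochS (m%:R + 3 / 2) k.
rewrite poch_shift in h1.
rewrite (_ : m%:R + 3 / 2 + 1 = (m.+1)%:R + 3 / 2 :> rat) in h1; last by rewrite [(m.+1)%:R]mulrSr addrAC.
rewrite -h1. rfield. all: qside.
Qed.

Lemma stepk d m k : 0 < d ->
  T d m.+1 k = (3 / 2 + m%:R) / (d + m%:R) * T d m k + (G d m k.+1 - G d m k).
Proof.
move=> hd.
rewrite /T /G (pochN m k) (pochQ m k) !pochS factS natrM exprS.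
rfield. all: qside.
Qed.

Lemma tele (f : nat -> rat) n : \sum_(k < n) (f k.+1 - f k) = f n - f 0%N.
Proof.
elim: n => [|n IH]; first by rewrite big_ord0 subrr.
rewrite big_ord_recr /= IH. rfield.
Qed.

Lemma mainsum d N m : 0 < d -> (m <= N)%N ->
  \sum_(k < N.+1) T d m k = poch (3 / 2) m / poch d m.
Proof.
move=> hd; elim: m => [|m IH] hmN.
  rewrite big_ord_recl big1 ?addr0; last first.
    by move=> i _; rewrite /T /= poch_negz // !(mul0r, mulr0).
  rewrite /T !poch0 expr0 fact0. rfield. all: qside.
rewrite (eq_bigr (fun k : 'I_N.+1 => (3 / 2 + m%:R) / (d + m%:R) * T d m k + (G d m k.+1 - G d m k))); last first.
  by move=> k _; apply: stepk.
rewrite big_split /= -mulr_sumr IH ?(ltnW hmN) //.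
rewrite (tele (G d m)).
rewrite /G (@poch_negz m.+1 N.+1) // !(mul0r, mulr0, subr0).
rewrite !pochS. rfield. all: qside.
Qed.



Definition gRc (c : rat) (n : nat) : rat := c ^+ n
     * (poch (11 / 12) n * poch (5 / 6) n * poch (1 / 2) n * poch (5 / 12) n
        * poch (7 / 6) n ^+ 2)
     / (poch (11 / 21) n * poch (23 / 21) n * poch (5 / 21) n * poch (17 / 21) n
        * poch (8 / 21) n * poch (20 / 21) n).
Definition gR (n : nat) : rat := gRc ((2 ^+ 8 * 3 ^+ 3) / 7 ^+ 7) n.
Definition fR (n : nat) : rat := poch (3 / 2) (3 * n) * poch (5 / 3) (4 * n) / poch (5 / 3) (7 * n).


Lemma gRc_gt0 c n : 0 < c -> 0 < gRc c n.
Proof. move=> hc; rewrite /gRc. pos. Qed.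
Lemma fR_gt0 n : 0 < fR n.
Proof. rewrite /fR. pos. Qed.

Lemma fS3 t n : t = 3 ^+ 3 -> poch (3 / 2) (3 * n.+1) = poch (3 / 2) (3 * n) * (t * ((1 / 2 + n%:R) * (5 / 6 + n%:R) * (7 / 6 + n%:R))).
Proof.
move=> ->.
have E3 : (3 * n.+1 = (3 * n).+3)%N by rewrite mulnS addnC !addnS addn0.
rewrite E3 !pochS !exprS expr0. rfield. all: qside.
Qed.
Lemma fS4 t n : t = 2 ^+ 8 -> poch (5 / 3) (4 * n.+1) = poch (5 / 3) (4 * n) * (t * ((5 / 12 + n%:R) * (2 / 3 + n%:R) * (11 / 12 + n%:R) * (7 / 6 + n%:R))).
Proof.
move=> ->.
have E4 : (4 * n.+1 = (4 * n).+4)%N by rewrite mulnS addnC !addnS addn0.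
rewrite E4 !pochS !exprS expr0. rfield. all: qside.
Qed.
Lemma fS7 t n : t = 7 ^+ 7 -> poch (5 / 3) (7 * n.+1) = poch (5 / 3) (7 * n) * (t * ((5 / 21 + n%:R) * (8 / 21 + n%:R) * (11 / 21 + n%:R) * (2 / 3 + n%:R) * (17 / 21 + n%:R) * (20 / 21 + n%:R) * (23 / 21 + n%:R))).
Proof.
move=> ->.
have E7 : (7 * n.+1 = (7 * n).+4.+3)%N by rewrite mulnS addnC !addnS addn0.
rewrite E7 !pochS !exprS expr0. rfield. all: qside.
Qed.

Lemma fR_step c t2 t3 t7 n : 0 < t7 -> t2 = 2 ^+ 8 -> t3 = 3 ^+ 3 -> t7 = 7 ^+ 7 ->
  c = t2 * t3 / t7 ->
  fR n.+1 * gRc c n = gRc c n.+1 * fR n.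
Proof.
move=> h7 h2 h3 h7e hc.
rewrite /fR /gRc (fS3 _ n h3) (fS4 _ n h2) (fS7 _ n h7e) (exprS c n) !expr2 !pochS hc.
clear h2 h3 h7e hc. rfield. all: qside.
Qed.

Lemma gRc0 c : gRc c 0 = 1.
Proof. rewrite /gRc !poch0 expr0 expr1n. rfield. all: qside. Qed.
Lemma fR0 : fR 0 = 1.
Proof. rewrite /fR !muln0 !poch0. rfield. all: qside. Qed.

Lemma fRgRc c : c = (2 ^+ 8 * 3 ^+ 3) / 7 ^+ 7 -> forall n, fR n = gRc c n.
Proof.
move=> hc.
have hc0 : 0 < c by rewrite hc; clear hc; pos.
have h7 : 0 < 7 ^+ 7 :> rat by apply: exprn_gt0; rewrite ltr0n.
have step := fun n => fR_step c _ _ _ n h7 erefl erefl erefl hc.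
clear hc h7.
elim=> [|n IH]; first by rewrite fR0 gRc0.
have h := step n.
rewrite IH in h.
apply: (mulIf (lt0r_neq0 (gRc_gt0 c n hc0))).
exact: h.
Qed.

Lemma rhsid n : poch (3 / 2) (3 * n) / poch ((4 * n)%:R + 5 / 3) (3 * n) = gR n.
Proof.
transitivity (fR n); last exact: (fRgRc ((2 ^+ 8 * 3 ^+ 3) / 7 ^+ 7) erefl n).
have E : (7 * n = 4 * n + 3 * n)%N by rewrite -mulnDl.
rewrite /fR E poch_add [5 / 3 + _]addrC. rfield. all: qside.
Qed.



Theorem theorem11 (n : nat) (N : nat) (hN : (3 * n <= N)%N) :
  \sum_(k < N.+1)
     (-1) ^+ k * (4 * k%:R + 1)
     * (poch (- (3 * n)%:R) k * poch (- (4 * n)%:R - 1 / 6) k * poch (1 / 2) k)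
     / ((k`!)%:R * poch ((3 * n)%:R + 3 / 2) k * poch ((4 * n)%:R + 5 / 3) k)
  = ((2 ^+ 8 * 3 ^+ 3) / 7 ^+ 7) ^+ n
     * (poch (11 / 12) n * poch (5 / 6) n * poch (1 / 2) n * poch (5 / 12) n
        * poch (7 / 6) n ^+ 2)
     / (poch (11 / 21) n * poch (23 / 21) n * poch (5 / 21) n * poch (17 / 21) n
        * poch (8 / 21) n * poch (20 / 21) n).
Proof.
have hd : 0 < (4 * n)%:R + 5 / 3 :> rat by pos.
have e : - (4 * n)%:R - 1 / 6 = 3 / 2 - ((4 * n)%:R + 5 / 3) :> rat.
  rfield. all: qside.
transitivity (\sum_(k < N.+1) T ((4 * n)%:R + 5 / 3) (3 * n) k).
  by apply: eq_bigr => k _; rewrite /T e.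
rewrite (mainsum _ _ _ hd hN).
exact: (rhsid n).
Qed.
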